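(* Let $G$ be a finite group and $N\lhd G$ a normal subgroup which is simple and non-abelian. Let $r\in N$. If $\mathcal O_r^G\cap N\neq \mathcal O_r^N$, then $\mathcal O_r^G$ is of type C.
   Context: For $H\leqslant G$ and $g\in G$, $\mathcal O_g^H$ is the orbit of $g$ under conjugation by $H$. A conjugacy class $\mathcal O$ of a finite group $G$ is of type C if there are $H\leqslant G$ and $r,s\in H\cap\mathcal O$ such that $rs\neq sr$, $H=\langle \mathcal O_r^H,\mathcal O_s^H\rangle$, $\mathcal O_r^H\neq\mathcal O_s^H$, and either $\min\{|\mathcal O_r^H|,|\mathcal O_s^H|\}>2$ or $\max\{|\mathcal O_r^H|,|\mathcal O_s^H|\}>4$. *)

(* Defs.v *)
From mathcomp Require Import all_boot all_fingroup.
Set Implicit Arguments. Unset Strict Implicit. Unset Printing Implicit Defensive.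
Local Open Scope group_scope.

Definition orb (gT : finGroupType) (H : {set gT}) (g : gT) : {set gT} := g ^: H.

Definition typeC (gT : finGroupType) (G : {group gT}) (O : {set gT}) : Prop :=
  exists (H : {group gT}) (r s : gT),
    [/\ H \subset G, r \in H :&: O, s \in H :&: O & r * s != s * r] /\
    [/\ (H :=: <<orb H r :|: orb H s>>), orb H r != orb H s &
        ((2 < minn #|orb H r| #|orb H s|)%N \/ (4 < maxn #|orb H r| #|orb H s|)%N)].

(* Main.v *)
Require Import Defs.
From mathcomp Require Import all_boot all_fingroup all_solvable.
Local Open Scope group_scope.

Lemma simple_center_abel (gT : finGroupType) (N : {group gT}) (x : gT) :
  simple N -> x \in N -> x != 1 -> x \in 'C(N) -> abelian N.
Proof.
move=> /simpleP [_ sN] xN x1 xC.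
have [Z1|ZN] := sN _ (center_normal N); idtac.
  move: x1; have: x \in ('Z(N))%G by rewrite inE xN xC.
  by rewrite Z1 inE => ->.
by rewrite -ZN center_abelian.
Qed.

Lemma class_gt2 (gT : finGroupType) (N : {group gT}) (x : gT) :
  simple N -> ~~ abelian N -> x \in N -> x != 1 -> (2 < #|x ^: N|)%N.
Proof.
move=> sN nab xN x1; rewrite -index_cent1 ltnNge; apply/negP => le2.
have sCN : 'C_N[x] \subset N by apply: subsetIl.
have nC : 'C_N[x] <| N.
  have := indexg_gt0 N 'C_N[x].
  case E: #|N : 'C_N[x]| => [|[|[|k]]] //= _.
  - by rewrite (index1g sCN E) normal_refl.
  - exact: index2_normal.
  - by rewrite E in le2.
case/simpleP: (sN) => _ sN'.
have [C1|CN] := sN' _ nC; idtac.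
  move: x1; have: x \in ('C_N[x])%G by rewrite inE xN cent1id.
  by rewrite C1 inE => ->.
apply: (negP nab); apply: (simple_center_abel _ _ _ sN xN x1).
by rewrite -sub_cent1 -CN subsetIr.
Qed.

Lemma gen_class (gT : finGroupType) (N : {group gT}) (x : gT) :
  simple N -> x \in N -> x != 1 -> <<x ^: N>> = N.
Proof.
move=> /simpleP [_ sN] xN x1.
have nG : <<x ^: N>> <| N.
  rewrite /normal gen_subG class_subG //=.
  exact: subset_trans (class_norm x N) (norm_gen _).
have [G1|GN] := sN _ nG; idtac.
  move: x1; have: x \in (<<x ^: N>>)%G by rewrite mem_gen // class_refl.
  by rewrite /= G1 inE => ->.
by [].
Qed.

Theorem mainTheorem4 (gT : finGroupType) (G N : {group gT}) (r : gT) :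
  N <| G -> simple N -> ~~ abelian N -> r \in N ->
  orb G r :&: N != orb N r ->
  typeC G (orb G r).
Proof.
move=> nNG sN nab rN neq.
have sNG : N \subset G by case/andP: nNG.
have r1 : r != 1.
  apply: contra neq => /eqP ->; rewrite /orb !class1G.
  by apply/eqP/setIidPl; rewrite sub1set group1.
have sub : orb N r \subset orb G r :&: N.
  by rewrite subsetI class_subG // imsetS // (subset_trans sNG) ?subsetT ?class_subG.
have : ~~ (orb G r :&: N \subset orb N r).
  by apply: contra neq => H; rewrite eqEsubset H sub.
case/subsetPn => s /setIP [sG sN0] snr.
have s1 : s != 1.
  apply: contra snr => /eqP s1'; move: sG; rewrite s1' /orb => /class_eqP.
  by rewrite class1G => /esym/eqP; rewrite classG_eq1 (negPf r1).
have : [exists a in r ^: N, exists b in s ^: N, a * b != b * a].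
  apply: contraT => H; suff: abelian N by rewrite (negPf nab).
  have cs : s ^: N \subset 'C(r ^: N).
    apply/centsP => b bs a ar; apply/eqP; apply/negPn/negP => nab'.
    apply: (negP H); apply/existsP; exists a; rewrite ar /=; apply/existsP; exists b.
    by rewrite bs eq_sym.
  move: cs; rewrite -gen_subG /= -cent_gen (gen_class _ _ _ sN rN r1) (gen_class _ _ _ sN sN0 s1).
  by [].
case/existsP => a /andP [ar /existsP [b /andP [bs ab]]].
have eqa : a ^: N = r ^: N by apply/class_eqP.
have eqb : b ^: N = s ^: N by apply/class_eqP.
have eqs : s ^: G = r ^: G by apply/class_eqP.
exists N, a, b; split; first split => //.
- rewrite inE (subsetP (class_subG rN (subxx _)) _ ar) /orb.
  by rewrite (subsetP (imsetS _ sNG) _ ar).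
- rewrite inE (subsetP (class_subG sN0 (subxx _)) _ bs) /orb -eqs.
  by rewrite (subsetP (imsetS _ sNG) _ bs).
split; rewrite /orb ?eqa ?eqb.
- apply/eqP; rewrite eqEsubset gen_subG subUset !class_subG // andbT.
  by rewrite -{1}(gen_class _ _ _ sN rN r1) genS // subsetUl.
- apply/eqP => E; apply: (negP snr); by rewrite /orb E class_refl.
- left; rewrite leq_min !(class_gt2 _ _ _ sN nab) //.
Qed.
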